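(* Let $m\ge 2$, $\alpha_0\in(0,\tfrac{\pi}{2})$ and $b=\tfrac12\tan\alpha_0$. Then the set $$S^m_{\alpha_0}=\Big\{z\in\mathbb{C}^m:\ \text{for each }k,\ z_k=0\text{ or }|\arg z_k|\le\alpha_0,\ \ \sum_{k=1}^m z_k=1\Big\}$$ is a convex polytope: every $z\in S^m_{\alpha_0}$ is a convex combination of the $m^2$ points $e^1,\dots,e^m$ (standard basis vectors) and the $m(m-1)$ vectors having exactly two nonzero coordinates, one equal to $\tfrac12+bi$ and another equal to $\tfrac12-bi$. In particular $S^m_{\alpha_0}$ is the convex hull of these $m^2$ points.
   Context: $\arg$ denotes the principal argument with values in $(-\pi,\pi]$. A convex polytope in $\mathbb{C}^m$ is the convex hull of finitely many points. *)

(* Defs.v *)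
From HB Require Import structures.
From mathcomp Require Import all_boot all_order all_algebra.
From mathcomp Require Import all_classical all_reals all_analysis.
From mathcomp Require Import complex.
Set Implicit Arguments. Unset Strict Implicit. Unset Printing Implicit Defensive.
Import Order.TTheory GRing.Theory Num.Theory.
Local Open Scope ring_scope.
Local Open Scope complex_scope.

Section Defs.
Variable R : realType.

(* Principal argument with values in (-pi, pi]; convention Arg 0 = 0. *)
Definition Arg (z : R[i]) : R :=
  let x := complex.Re z in let y := complex.Im z in
  if 0 < x then atan (y / x)
  else if x < 0 then (if 0 <= y then atan (y / x) + pi else atan (y / x) - pi)
  else if 0 < y then pi / 2 else if y < 0 then - (pi / 2) else 0.

Definition Sset (m : nat) (a0 : R) (z : 'I_m -> R[i]) : Prop :=
  (forall k, z k = 0 \/ `|Arg (z k)| <= a0) /\ \sum_(k < m) z k = 1.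

Definition std_vec (m : nat) (j : 'I_m) : 'I_m -> R[i] :=
  fun k => if k == j then 1 else 0.

Definition pair_vec (m : nat) (b : R) (j l : 'I_m) : 'I_m -> R[i] :=
  fun k => if k == j then (2^-1 +i* b) else if k == l then (2^-1 -i* b) else 0.

Definition vertex (m : nat) (b : R) (v : 'I_m -> R[i]) : Prop :=
  (exists j, v = std_vec j) \/ (exists j l, j != l /\ v = pair_vec b j l).

Definition conv_hull (m : nat) (P : ('I_m -> R[i]) -> Prop) (z : 'I_m -> R[i]) : Prop :=
  exists (n : nat) (w : 'I_n -> R) (p : 'I_n -> 'I_m -> R[i]),
    (forall i, 0 <= w i) /\ \sum_(i < n) w i = 1 /\ (forall i, P (p i)) /\
    (forall k, z k = \sum_(i < n) (w i)%:C * p i k).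

End Defs.

(* Main.v *)
Require Import Defs.
From HB Require Import structures.
From mathcomp Require Import all_boot all_order all_algebra.
From mathcomp Require Import all_classical all_reals all_analysis.
From mathcomp Require Import complex.
From mathcomp Require Import ring lra.
Import Order.TTheory GRing.Theory Num.Theory.
Local Open Scope ring_scope.
Section S.
Variable R : realType.
Local Open Scope complex_scope.

Lemma tan_pos (a0 : R) : 0 < a0 < pi / 2 -> 0 < tan a0.
Proof.
move=> /andP[h0 h1]; rewrite ltNge; apply/negP => le0.
have := le_atan le0; rewrite atan0 tanK //.
  by rewrite leNgt h0.

by rewrite in_itv /= h1 andbT (lt_trans _ h0) // oppr_lt0 divr_gt0 // pi_gt0.

Qed.

Lemma atan_le_iff (a0 s : R) : 0 < a0 < pi / 2 ->
  (`|atan s| <= a0) = (`|s| <= tan a0).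
Proof.
move=> ha; have [h0 h1] := andP ha.
have ta : atan (tan a0) = a0.
  by rewrite tanK // in_itv /= h1 andbT (lt_trans _ h0) // oppr_lt0 divr_gt0 // pi_gt0.
apply/idP/idP.
- move=> h; rewrite leNgt; apply/negP => lt.
  have [sp|sn] := leP 0 s.
    rewrite ger0_norm // in lt; have := lt_atan lt; rewrite ta => /lt_le_trans/(_ (ler_norm _)).
    by rewrite ltNge h.
  rewrite ltr0_norm // in lt; have : s < - tan a0 by rewrite ltrNr.
  move=> /lt_atan; rewrite atanN ta => h2.
  by move: h; rewrite ler_norml => /andP[h3 _]; move: h3; rewrite leNgt h2.
- move=> h; rewrite ler_norml; move: h; rewrite ler_norml => /andP[l r].
  apply/andP; split.
    by rewrite -ta -atanN le_atan.
  by rewrite -ta le_atan.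
Qed.

Lemma arg_iff (a0 : R) (z : R[i]) : 0 < a0 < pi / 2 ->
  (z = 0 \/ `|Arg z| <= a0) <->
  (0 <= complex.Re z /\ `|complex.Im z| <= tan a0 * complex.Re z).
Proof.
move=> ha; have [h0 h1] := andP ha; have tp := tan_pos a0 ha.
have pp := pi_gt0 R.
case: z => x y; rewrite /Arg /=.
have [xn|xp|->] := ltgtP x 0.
- split; last by case.
  case.
    by case=> /eqP; rewrite lt_eqF.
  have := atan_gtNpi2 (y / x); have := atan_ltpi2 (y / x).
  case: ifP => _ a1 a2; rewrite ler_norml => /andP[b1 b2]; lra.
- split.
    case. by case=> /eqP; rewrite gt_eqF.

    by rewrite atan_le_iff // normrM [`|x^-1|]gtr0_norm ?invr_gt0 // ler_pdivrMr // mulrC.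
  by case=> _ h; right; rewrite atan_le_iff // normrM [`|x^-1|]gtr0_norm ?invr_gt0 // ler_pdivrMr // mulrC.
- rewrite mulr0; have [yn|yp|->] := ltgtP y 0.
  + split; last by case=> _; rewrite leNgt normr_gt0 lt_eqF.
    case; first by case=> /eqP; rewrite lt_eqF.
    rewrite ler_norml => /andP[b1 b2]; lra.
  + split; last by case=> _; rewrite leNgt normr_gt0 gt_eqF.
    case; first by case=> /eqP; rewrite gt_eqF.
    rewrite ler_norml => /andP[b1 b2]; lra.
  + by split => _; [rewrite normr0|left].
Qed.

Lemma ceq (z w : R[i]) : complex.Re z = complex.Re w -> complex.Im z = complex.Im w -> z = w.
Proof. by case: z => a b; case: w => c d /= -> ->. Qed.

Lemma Re_sum (I : finType) (F : I -> R[i]) :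
  complex.Re (\sum_(i : I) F i) = \sum_(i : I) complex.Re (F i).
Proof.
apply: (big_morph (@complex.Re R)) => //.
by move=> [a b] [c d].
Qed.

Lemma Im_sum (I : finType) (F : I -> R[i]) :
  complex.Im (\sum_(i : I) F i) = \sum_(i : I) complex.Im (F i).
Proof.
apply: (big_morph (@complex.Im R)) => //.
by move=> [a b] [c d].
Qed.

Lemma Re_scale (c : R) (w : R[i]) : complex.Re (c%:C * w) = c * complex.Re w.
Proof. by case: w => a b /=; rewrite mul0r subr0. Qed.

Lemma Im_scale (c : R) (w : R[i]) : complex.Im (c%:C * w) = c * complex.Im w.
Proof. by case: w => a b /=; rewrite mul0r addr0. Qed.

Lemma sum_dirac (m : nat) (k : 'I_m) (F : 'I_m -> R) :
  \sum_(j < m) (if j == k then F j else 0) = F k.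
Proof. by rewrite -big_mkcond big_pred1_eq. Qed.

Lemma sum_dirac' (m : nat) (k : 'I_m) (F : 'I_m -> R) :
  \sum_(j < m) (if k == j then F j else 0) = F k.
Proof. by rewrite -(@sum_dirac _ k F); apply: eq_bigr => j _; rewrite eq_sym. Qed.

Lemma vert_ok (m : nat) (t : R) (v : 'I_m -> R[i]) : 0 <= t -> vertex (t / 2) v ->
  (forall k, 0 <= complex.Re (v k) /\ `|complex.Im (v k)| <= t * complex.Re (v k))
  /\ \sum_(k < m) v k = 1.
Proof.
move=> t0 [[j ->]|[j [l [jl ->]]]].
  split.
    by move=> k; rewrite /std_vec; case: (k == j) => /=; rewrite ?normr0 ?mulr0 ?mulr1.
  rewrite /std_vec.
  by rewrite -big_mkcond big_pred1_eq.
split.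
  move=> k; rewrite /pair_vec; case: (k == j) => /=.
    by rewrite ger0_norm ?divr_ge0.
  case: (k == l) => /=; last by rewrite normr0 mulr0.
  by rewrite normrN ger0_norm ?divr_ge0.
rewrite (bigD1 j) // (bigD1 l) /=; last by rewrite eq_sym.
rewrite big1; last by move=> k /andP[kl kj]; rewrite /pair_vec (negbTE kl) (negbTE kj).
have lj : (l == j) = false by rewrite eq_sym (negbTE jl).
rewrite /pair_vec eqxx lj eqxx.
by apply: ceq => /=; field.
Qed.

Lemma hull_to_S (m : nat) (a0 : R) (z : 'I_m -> R[i]) : 0 < a0 < pi / 2 ->
  conv_hull (vertex (tan a0 / 2)) z -> Sset a0 z.
Proof.
move=> ha [n [w [p [w0 [w1 [pv zE]]]]]].
have t0 := ltW (tan_pos a0 ha).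
have vk i k := (vert_ok _ _ _ t0 (pv i)).1 k.
split.
  move=> k; apply (proj2 (arg_iff _ (z k) ha)).
  rewrite zE Re_sum Im_sum.
  under eq_bigr do rewrite Re_scale.
  under [X in `|X|]eq_bigr do rewrite Im_scale.
  split.
    by apply: sumr_ge0 => i _; apply: mulr_ge0 (w0 i) (vk i k).1.
  apply: le_trans (ler_norm_sum _ _ _) _.
  rewrite mulr_sumr; apply: ler_sum => i _.
  rewrite normrM (ger0_norm (w0 i)) mulrCA.
  by apply: ler_wpM2l; [exact: w0 | exact: (vk i k).2].
under eq_bigr do rewrite zE.
rewrite exchange_big /=.
under eq_bigr do rewrite -mulr_sumr (vert_ok _ _ _ t0 (pv _)).2 mulr1.
by rewrite -rmorph_sum w1.
Qed.

Lemma sum_enum (V : nmodType) (I : finType) (F : I -> V) :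
  \sum_(i < #|{:I}|) F (enum_val i) = \sum_(q : I) F q.
Proof. by rewrite -(big_enum_val F). Qed.

Lemma pairE (V : nmodType) (m : nat) (F : 'I_m * 'I_m -> V) :
  \sum_(q : 'I_m * 'I_m) F q = \sum_(j < m) \sum_(l < m) F (j, l).
Proof. by rewrite pair_bigA; apply: eq_bigr => -[]. Qed.

Lemma sum_dirac_c (m : nat) (k : 'I_m) (a : R) :
  \sum_(j < m) (if j == k then a else 0) = a.
Proof. exact: (@sum_dirac _ k (fun _ => a)). Qed.

Lemma S_to_hull (m : nat) (a0 : R) (z : 'I_m -> R[i]) : 0 < a0 < pi / 2 ->
  Sset a0 z -> conv_hull (vertex (tan a0 / 2)) z.
Proof.
move=> ha [zk zs].
set t := tan a0; have tp : 0 < t := tan_pos a0 ha.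
pose x k := complex.Re (z k); pose y k := complex.Im (z k).
have hk k : 0 <= x k /\ `|y k| <= t * x k := proj1 (arg_iff _ (z k) ha) (zk k).
have sx : \sum_k x k = 1 by rewrite /x -Re_sum zs.
have sy : \sum_k y k = 0 by rewrite /y -Im_sum zs.
pose u k := y k / t.
pose up k := if 0 <= u k then u k else 0.
pose un k := if 0 <= u k then 0 else - u k.
have up0 k : 0 <= up k by rewrite /up; case: (leP 0 (u k)).
have un0 k : 0 <= un k by rewrite /un; case: (leP 0 (u k)) => // h; rewrite oppr_ge0 ltW.
have upn k : up k - un k = u k by rewrite /up /un; case: (leP 0 (u k)) => _; rewrite ?subr0 ?sub0r ?opprK.
have upa k : up k + un k = `|u k|.
  rewrite /up /un; case: (leP 0 (u k)) => h; [by rewrite addr0 ger0_norm | by rewrite add0r ltr0_norm].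
have upm k : up k * un k = 0 by rewrite /up /un; case: (leP 0 (u k)) => _; rewrite ?mulr0 ?mul0r.
have ux k : `|u k| <= x k.
  by rewrite /u normrM [`|t^-1|]gtr0_norm ?invr_gt0 // ler_pdivrMr // mulrC; exact: (hk k).2.
pose U := \sum_k up k.
have su : \sum_k u k = 0 by rewrite /u -mulr_suml sy mul0r.
have sun : \sum_k un k = U.
  have : \sum_k (up k - un k) = \sum_k u k by apply: eq_bigr => k _; rewrite upn.
  by rewrite su sumrB /U => /eqP; rewrite subr_eq0 => /eqP.
have U0 : 0 <= U by apply: sumr_ge0.
have upU k : up k * U / U = up k.
  case: (eqVneq U 0) => [UE|Un]; last by rewrite mulfK.
  have := (psumr_eq0P (fun i _ => up0 i) UE) k isT.
  by rewrite UE mulr0 mul0r => ->.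
have unU k : un k * U / U = un k.
  case: (eqVneq U 0) => [UE|Un]; last by rewrite mulfK.
  have UE' : \sum_k un k = 0 by rewrite sun.
  have := (psumr_eq0P (fun i _ => un0 i) UE') k isT.
  by rewrite UE mulr0 mul0r => ->.
pose c j l := 2 * up j / U * un l.
have c0 j l : 0 <= c j l by rewrite /c !mulr_ge0 ?invr_ge0.
have cjj j : c j j = 0.
  have -> : c j j = 2 / U * (up j * un j) by rewrite /c; ring.
  by rewrite upm mulr0.
have sc1 j : \sum_l c j l = 2 * up j.
  rewrite /c -mulr_sumr sun.
  have -> : 2 * up j / U * U = 2 * (up j * U / U) by ring.
  by rewrite upU.
have sc2 l : \sum_j c j l = 2 * un l.
  rewrite /c -mulr_suml -mulr_suml -mulr_sumr -/U.
  have -> : 2 * U / U * un l = 2 * (un l * U / U) by ring.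
  by rewrite unU.
pose w (q : 'I_m * 'I_m) := (if q.2 == q.1 then x q.1 - `|u q.1| else 0) + c q.1 q.2.
pose p (q : 'I_m * 'I_m) := if q.1 == q.2 then @std_vec R _ q.1 else pair_vec (t / 2) q.1 q.2.
exists #|{: 'I_m * 'I_m}|, (fun i => w (enum_val i)), (fun i => p (enum_val i)).
split.
  move=> i; rewrite /w; apply: addr_ge0 => //.
  by case: ifP => // _; rewrite subr_ge0.
split.
  rewrite (sum_enum _ _ w) pairE /w /=.
  under eq_bigr => j _ do rewrite big_split /= sum_dirac_c sc1.
  have sa : \sum_j `|u j| = U + U.
    by rewrite -(eq_bigr _ (fun k _ => upa k)) big_split sun.
  rewrite big_split sumrB sx sa -mulr_sumr -/U /=; lra.
split.
  move=> i; rewrite /p; case: ifP => h; first by left; exists (enum_val i).1.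
  by right; exists (enum_val i).1, (enum_val i).2; rewrite h.
move=> k; apply: ceq.
  rewrite Re_sum; under eq_bigr do rewrite Re_scale.
  rewrite (sum_enum _ _ (fun q => w q * complex.Re (p q k))) pairE.
  pose TR j l := (if l == j then (if k == j then x j - `|u j| else 0) else 0) +
     ((if k == j then c j l / 2 else 0) + (if k == l then c j l / 2 else 0)).
  have tRe j l : w (j, l) * complex.Re (p (j, l) k) = TR j l.
    rewrite /w /p /TR /=; case: (eqVneq l j) => [->|lj].
      by rewrite cjj /std_vec; case: (k == j) => /=; ring.
    have jl : (j == l) = false by rewrite eq_sym (negbTE lj).
    rewrite ?(negbTE lj) ?jl /pair_vec.
    case: (eqVneq k j) => [->|kj]; first by rewrite ?eqxx ?jl /=; ring.
    by rewrite ?(negbTE kj); case: (k == l) => /=; ring.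
  have -> : \sum_j \sum_l w (j, l) * complex.Re (p (j, l) k) = \sum_j \sum_l TR j l.
    by apply: eq_bigr => j _; apply: eq_bigr => l _; exact: tRe.
  rewrite /TR.
  under eq_bigr => j _ do rewrite big_split /= sum_dirac_c big_split /= sum_dirac'.
  rewrite big_split /= sum_dirac' big_split /= exchange_big /=.
  under eq_bigr => l _ do rewrite sum_dirac'.
  rewrite -mulr_suml sc1 -mulr_suml -upa /x; have h2 := sc2 k; lra.
rewrite Im_sum; under eq_bigr do rewrite Im_scale.
rewrite (sum_enum _ _ (fun q => w q * complex.Im (p q k))) pairE.
pose TI j l := (if k == j then c j l * (t / 2) else 0) - (if k == l then c j l * (t / 2) else 0).
have tIm j l : w (j, l) * complex.Im (p (j, l) k) = TI j l.
  rewrite /w /p /TI /=; case: (eqVneq l j) => [->|lj].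
    by rewrite cjj /std_vec; case: (k == j) => /=; ring.
  have jl : (j == l) = false by rewrite eq_sym (negbTE lj).
  rewrite ?(negbTE lj) ?jl /pair_vec.
  case: (eqVneq k j) => [->|kj]; first by rewrite ?eqxx ?jl /=; ring.
  by rewrite ?(negbTE kj); case: (k == l) => /=; ring.
have -> : \sum_j \sum_l w (j, l) * complex.Im (p (j, l) k) = \sum_j \sum_l TI j l.
  by apply: eq_bigr => j _; apply: eq_bigr => l _; exact: tIm.
rewrite /TI.
under eq_bigr => j _ do rewrite sumrB sum_dirac'.
rewrite sumrB exchange_big /=.
under eq_bigr => l _ do rewrite sum_dirac'.
rewrite -mulr_suml sc1 -mulr_suml.
have uy : u k * t = y k by rewrite /u divfK // gt_eqF.
have e S : S = 2 * un k -> y k = 2 * up k * (t / 2) - S * (t / 2).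
  by move=> ->; rewrite -uy -upn; field.
by apply: e; exact: sc2 k.
Qed.
End S.

Theorem theorem3p2 (R : realType) (m : nat) (a0 : R) :
  (2 <= m)%N -> 0 < a0 < pi / 2 ->
  forall z : 'I_m -> R[i],
    Sset a0 z <-> conv_hull (vertex (tan a0 / 2)) z.
Proof.
move=> _ ha z; split.
  exact: (S_to_hull _ _ _ _ ha).
exact: (hull_to_S _ _ _ _ ha).
Qed.
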